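(* Let $Z$ be a topological space, $S\colon Z\to Z$ continuous, $X\subset Z$ a Borel subset with $S(X)\subset X$, equipped with the induced topology, and $T=S|_X$. Let $\mu$ be a finite $S$-invariant Borel measure on $Z$, and let $\mathcal Z=\{Z_0,\dots,Z_k\}$ be a measurable partition of $Z$ such that $Z_1,\dots,Z_k\subset X$. Then $\mu$ (restricted to $X$) is $T$-invariant and $$h_\mu(\mathcal Z,S)\le h_\mu(\mathcal C,T),\qquad\text{where } \mathcal C=X\cap\mathcal Z=\{X\cap Z_j: 0\le j\le k\}.$$
   Context: For a map $R$ on a space $Y$ and a finite measurable partition $\mathcal P$, $\mathcal P\vee\mathcal Q=\{P\cap Q:P\in\mathcal P,Q\in\mathcal Q,P\cap Q\ne\emptyset\}$ and $\mathcal P^n_R=\mathcal P\vee R^{-1}(\mathcal P)\vee\dots\vee R^{-(n-1)}(\mathcal P)$. For a finite measure $\mu$, $H_\mu(\mathcal P)=\sum_{P\in\mathcal P}\mu(P)\log\frac1{\mu(P)}$ (with $0\log\frac10=0$), and for $R$-invariant $\mu$, $h_\mu(\mathcal P,R)=\lim_n\frac1nH_\mu(\mathcal P^n_R)$. *)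

(* Defs.v *)
From HB Require Import structures.
From mathcomp Require Import all_boot all_order all_algebra.
From mathcomp Require Import all_classical all_reals all_analysis.
Set Implicit Arguments. Unset Strict Implicit. Unset Printing Implicit Defensive.
Import Order.TTheory GRing.Theory Num.Theory numFieldNormedType.Exports.
Local Open Scope classical_set_scope.
Local Open Scope ring_scope.

Definition borel (Z : topologicalType) : set (set Z) := <<s @open Z >>.

Definition borel_measure (Z : topologicalType) (R : realType)
  (mu : set Z -> \bar R) : Prop :=
  [/\ mu set0 = 0%E,
      forall A, borel A -> (0 <= mu A)%E &
      forall F : nat -> set Z, (forall n, borel (F n)) -> trivIset setT F ->
        (\sum_(0 <= i < n) mu (F i))%E @[n --> \oo] --> mu (\bigcup_n F n)].

Definition induced_borel (Z : topologicalType) (X : set Z) : set (set {x : Z | X x}) :=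
  <<s [set (@proj1_sig Z X) @^-1` U | U in @open Z] >>.
Arguments induced_borel [Z] X _.

Definition restr_map (Z : Type) (S : Z -> Z) (X : set Z)
  (hSX : forall x, X x -> X (S x)) : {x : Z | X x} -> {x : Z | X x} :=
  fun x => exist X (S (proj1_sig x)) (hSX _ (proj2_sig x)).

Definition restr_measure (Z : Type) (R : realType) (m : set Z -> \bar R) (X : set Z)
  : set {x : Z | X x} -> \bar R := fun B => m (@proj1_sig Z X @` B).
Arguments restr_measure [Z R] m X _.

(* A finite partition P = {P_0,...,P_k} is given as a family indexed by 'I_k.+1.
   The cells of P^n_R = P v R^-1 P v ... v R^-(n-1) P are indexed by words
   w : n.-tuple 'I_k.+1, cell w = \bigcap_{i<n} R^-i (P (w_i)). *)
Definition join_cell (Y : Type) (k n : nat) (R : Y -> Y) (P : 'I_k.+1 -> set Y)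
  (w : n.-tuple 'I_k.+1) : set Y :=
  [set y | forall i : 'I_n, P (tnth w i) (iter i R y)].

Definition ent_fun (R : realType) (x : R) : R :=
  if x == 0 then 0 else x * ln (x^-1).

(* H_m(P^n_R); the measure is finite, so values are real via fine.
   Empty cells have measure 0 and distinct words give distinct nonempty
   cells (P is a partition), so this is the sum over the elements of P^n_R. *)
Definition entropy_n (Y : Type) (R : realType) (m : set Y -> \bar R)
  (T : Y -> Y) (k : nat) (P : 'I_k.+1 -> set Y) (n : nat) : R :=
  \sum_(w : n.-tuple 'I_k.+1) ent_fun (fine (m (join_cell T P w))).

Definition ks_entropy (Y : Type) (R : realType) (m : set Y -> \bar R)
  (T : Y -> Y) (k : nat) (P : 'I_k.+1 -> set Y) : R :=
  limn (fun n : nat => n%:R^-1 * entropy_n m T P n).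

(* Main.v *)
Require Import Defs.
From HB Require Import structures.
From mathcomp Require Import all_boot all_order all_algebra.
From mathcomp Require Import all_classical all_reals all_analysis.
Import Order.TTheory GRing.Theory Num.Theory numFieldNormedType.Exports.
Local Open Scope classical_set_scope.
From mathcomp Require Import lra.
Local Open Scope ring_scope.
Set Implicit Arguments. Unset Strict Implicit.


Lemma borel0 (Z : topologicalType) : borel (@set0 Z).
Proof. exact: sigma_algebra0. Qed.

Lemma borelT (Z : topologicalType) : borel (@setT Z).
Proof. by have := sigma_algebraCD (@borel0 Z); rewrite setD0. Qed.

Lemma borelC (Z : topologicalType) (A : set Z) : borel A -> borel (~` A).
Proof. by move=> h; rewrite -setTD; exact: sigma_algebraCD. Qed.

Lemma borel_bigcup (Z : topologicalType) (F : nat -> set Z) :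
  (forall n, borel (F n)) -> borel (\bigcup_n F n).
Proof. exact: sigma_algebra_bigcup. Qed.

Lemma borel_bigcap (Z : topologicalType) (F : nat -> set Z) :
  (forall n, borel (F n)) -> borel (\bigcap_n F n).
Proof.
move=> h; rewrite -[X in borel X]setCK setC_bigcap; apply: borelC.
by apply: borel_bigcup => n; apply: borelC.
Qed.

Lemma borelU (Z : topologicalType) (A B : set Z) :
  borel A -> borel B -> borel (A `|` B).
Proof.
move=> hA hB.
have -> : A `|` B = \bigcup_n (if n is 0 then A else B).
  apply/seteqP; split => x /=.
    by case=> h; [exists 0%N | exists 1%N].
  by case=> -[|n] _ h; [left|right].
by apply: borel_bigcup => -[|n].
Qed.

Lemma borelI (Z : topologicalType) (A B : set Z) :
  borel A -> borel B -> borel (A `&` B).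
Proof.
move=> hA hB; rewrite -[X in borel X]setCK setCI; apply: borelC.
by apply: borelU; apply: borelC.
Qed.

Lemma borelD (Z : topologicalType) (A B : set Z) :
  borel A -> borel B -> borel (A `\` B).
Proof. by move=> hA hB; rewrite setDE; apply: borelI => //; apply: borelC. Qed.

Lemma borel_open (Z : topologicalType) (A : set Z) : open A -> borel A.
Proof. by move=> h; apply: sub_sigma_algebra. Qed.

Lemma borel_pre (Z : topologicalType) (S : Z -> Z) (A : set Z) :
  continuous S -> borel A -> borel (S @^-1` A).
Proof.
move=> cS; apply: (@smallest_sub _ _ _ [set A | borel (S @^-1` A)]).
  split => /=.
  - by rewrite preimage_set0; apply: borel0.
  - move=> B hB; have -> : S @^-1` (setT `\` B) = setT `\` (S @^-1` B) by [].
    by apply: borelD => //; apply: borelT.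
  - by move=> F hF; rewrite preimage_bigcup; apply: borel_bigcup.
by move=> B hB /=; apply: borel_open; move/continuousP: cS; apply.
Qed.

Lemma borel_iter (Z : topologicalType) (S : Z -> Z) (A : set Z) i :
  continuous S -> borel A -> borel (iter i S @^-1` A).
Proof.
move=> cS hA; elim: i => [//|i IH].
have -> : iter i.+1 S @^-1` A = S @^-1` (iter i S @^-1` A).
  by apply/funext => x; rewrite /preimage /= -iterS iterSr.
exact: borel_pre.
Qed.
Lemma mu_add (Z : topologicalType) (R : realType) (mu : set Z -> \bar R) :
  borel_measure mu -> forall A B, borel A -> borel B -> A `&` B = set0 ->
  mu (A `|` B) = (mu A + mu B)%E.
Proof.
case=> m0 _ msig A B hA hB hAB.
pose F n := if n is 0 then A else if n is 1 then B else set0.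
have hF : forall n, borel (F n) by case=> [|[|n]] //=; apply: borel0.
have tF : trivIset setT F.
  move=> i j _ _ [x [Fi Fj]]; move: i j Fi Fj => [|[|i]] [|[|j]] //= Fi Fj.
  - by have : (A `&` B) x by []; rewrite hAB.
  - by have : (A `&` B) x by []; rewrite hAB.
have U : \bigcup_n F n = A `|` B.
  apply/seteqP; split => x /=.
    by case=> -[|[|n]] _ //= h; [left|right].
  by case=> h; [exists 0%N | exists 1%N].
have := msig F hF tF; rewrite U => h.
have h2 : (fun n => \sum_(0 <= i < n) mu (F i))%E @ \oo --> (mu A + mu B)%E.
  rewrite -(cvg_shiftn 2).
  have -> : [sequence (\sum_(0 <= i < n + 2) mu (F i))%E]_n = fun=> (mu A + mu B)%E.
    apply/funext => n /=; rewrite addn2 !big_nat_recl //= big1 ?adde0 //.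
  exact: cvg_cst.
exact: (cvg_unique (@ereal_hausdorff R) h h2).
Qed.

Lemma mu_ge0 (Z : topologicalType) (R : realType) (mu : set Z -> \bar R) :
  borel_measure mu -> forall A, borel A -> (0 <= mu A)%E.
Proof. by case. Qed.

Lemma mu_le (Z : topologicalType) (R : realType) (mu : set Z -> \bar R) :
  borel_measure mu -> forall A B, borel A -> borel B -> A `<=` B ->
  (mu A <= mu B)%E.
Proof.
move=> hmu A B hA hB AB; rewrite -(setDUK AB) mu_add //; last first.
- by apply/seteqP; split => x // [Ax [_ nAx]].
- exact: borelD.
by rewrite leeDl // mu_ge0 //; apply: borelD.
Qed.

Lemma mu_fin (Z : topologicalType) (R : realType) (mu : set Z -> \bar R) :
  borel_measure mu -> (mu setT < +oo)%E -> forall A, borel A ->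
  mu A \is a fin_num.
Proof.
move=> hmu hfin A hA; rewrite ge0_fin_numE ?mu_ge0 //.
by apply: le_lt_trans hfin; apply: mu_le => //; apply: borelT.
Qed.

Lemma mu_split (Z : topologicalType) (R : realType) (mu : set Z -> \bar R) :
  borel_measure mu -> forall A B, borel A -> borel B ->
  mu A = (mu (A `&` B) + mu (A `\` B))%E.
Proof.
move=> hmu A B hA hB; rewrite -mu_add ?setUIDK //.
- exact: borelI.
- exact: borelD.
by apply/seteqP; split => x // [[_ Bx] [_ nBx]].
Qed.

Lemma mu_null (Z : topologicalType) (R : realType) (mu : set Z -> \bar R) :
  borel_measure mu -> forall E N, borel E -> borel N -> E `<=` N ->
  mu N = 0%E -> mu E = 0%E.
Proof.
move=> hmu E N hE hN EN h0; apply/le_anti/andP; split; last exact: mu_ge0.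
by rewrite -h0; apply: mu_le.
Qed.

Lemma fin_cancel (R : realType) (a e : \bar R) :
  a \is a fin_num -> e \is a fin_num -> a = (a + e)%E -> e = 0%E.
Proof.
case: a => [a| |] //; case: e => [e| |] // _ _ [] h.
by congr (_%:E); lra.
Qed.

Lemma X_sub_Y (Z : Type) (S : Z -> Z) (X : set Z)
  (hSX : forall x, X x -> X (S x)) i : X `<=` iter i S @^-1` X.
Proof.
elim: i => [//|i IH] x Xx; rewrite /preimage /= .
by apply: hSX; exact: IH.
Qed.

Lemma iterpre (Z : Type) (S : Z -> Z) (A : set Z) i :
  iter i.+1 S @^-1` A = S @^-1` (iter i S @^-1` A).
Proof. by apply/funext => x; rewrite /preimage /= -iterS iterSr. Qed.

Lemma muY (Z : topologicalType) (R : realType) (S : Z -> Z) (X : set Z)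
  (mu : set Z -> \bar R) (hS : continuous S) (hX : borel X)
  (hinv : forall A, borel A -> mu (S @^-1` A) = mu A) i :
  mu (iter i S @^-1` X) = mu X.
Proof.
elim: i => [//|i IH]; rewrite iterpre hinv //; exact: borel_iter.
Qed.

Lemma nullY (Z : topologicalType) (R : realType) (S : Z -> Z) (X : set Z)
  (mu : set Z -> \bar R) (hmu : borel_measure mu) (hS : continuous S)
  (hX : borel X) (hSX : forall x, X x -> X (S x)) (hfin : (mu setT < +oo)%E)
  (hinv : forall A, borel A -> mu (S @^-1` A) = mu A) i :
  mu (iter i S @^-1` X `\` X) = 0%E.
Proof.
have hY := borel_iter i hS hX.
have := mu_split hmu hY hX; rewrite setIidr; last exact: X_sub_Y.
rewrite (muY hS hX hinv); apply: fin_cancel; first exact: mu_fin.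
by apply: mu_fin => //; apply: borelD.
Qed.

(* key: for E borel, E \ X inside Y_i \ X => mu E = mu (E /\ X) *)
Lemma mu_restrX (Z : topologicalType) (R : realType) (S : Z -> Z) (X : set Z)
  (mu : set Z -> \bar R) (hmu : borel_measure mu) (hS : continuous S)
  (hX : borel X) (hSX : forall x, X x -> X (S x)) (hfin : (mu setT < +oo)%E)
  (hinv : forall A, borel A -> mu (S @^-1` A) = mu A) (E : set Z) i :
  borel E -> (forall x, E x -> X (iter i S x)) -> mu (E `&` X) = mu E.
Proof.
move=> hE hEX; rewrite [RHS](mu_split hmu hE hX).
rewrite (@mu_null _ _ _ hmu (E `\` X) (iter i S @^-1` X `\` X)) ?adde0 //.
- exact: borelD.
- by apply: borelD => //; apply: borel_iter.
- by move=> x [Ex nXx]; split => //; apply: hEX.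
exact: nullY.
Qed.

Lemma sig_eq (Z : Type) (X : set Z) (y b : {x | X x}) :
  proj1_sig y = proj1_sig b -> y = b.
Proof.
case: y b => y hy [b hb] /= e; subst b; congr exist; exact: Prop_irrelevance.
Qed.

Lemma induced_img (Z : topologicalType) (X : set Z) (B : set {x | X x}) :
  borel X -> induced_borel X B -> borel (@proj1_sig Z X @` B).
Proof.
move=> hX; apply: (@smallest_sub _ _ _ [set B | borel (@proj1_sig Z X @` B)]).
  split => /=.
  - by rewrite image_set0; apply: borel0.
  - move=> C hC.
    have -> : @proj1_sig Z X @` (setT `\` C) = X `\` (@proj1_sig Z X @` C).
      apply/seteqP; split => x /=.
        case=> y [_ nCy] <-; split; first exact: proj2_sig.
        by case=> y' Cy' /sig_eq e; apply: nCy; rewrite -e.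
      case=> Xx nC; exists (exist X x Xx) => //; split => // Cx.
      by apply: nC; exists (exist X x Xx).
    exact: borelD.
  - by move=> F hF; rewrite image_bigcup; apply: borel_bigcup.
move=> C [U oU <-] /=.
have -> : @proj1_sig Z X @` (@proj1_sig Z X @^-1` U) = X `&` U.
  apply/seteqP; split => x /=.
    by case=> y Uy <-; split => //; exact: proj2_sig.
  by case=> Xx Ux; exists (exist X x Xx).
by apply: borelI => //; apply: borel_open.
Qed.

Lemma iter_restr (Z : Type) (S : Z -> Z) (X : set Z)
  (hSX : forall x, X x -> X (S x)) i (y : {x | X x}) :
  proj1_sig (iter i (restr_map hSX) y) = iter i S (proj1_sig y).
Proof. by elim: i => [//|i IH]; rewrite !iterS /= IH. Qed.

Lemma part1 (R : realType) (Z : topologicalType) (S : Z -> Z)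
  (X : set Z) (mu : set Z -> \bar R) (hmu : borel_measure mu)
  (hS : continuous S) (hX : borel X)
  (hSX : forall x, X x -> X (S x))
  (hfin : (mu setT < +oo)%E)
  (hinv : forall A, borel A -> mu (S @^-1` A) = mu A) :
  (forall B : set {x : Z | X x}, induced_borel X B ->
     restr_measure mu X (restr_map hSX @^-1` B) = restr_measure mu X B).
Proof.
move=> B hB; rewrite /restr_measure.
have hA := induced_img hX hB.
set A := @proj1_sig Z X @` B in hA *.
have -> : @proj1_sig Z X @` (restr_map hSX @^-1` B) = S @^-1` A `&` X.
  apply/seteqP; split => x /=.
    case=> y By <-; split; last exact: proj2_sig.
    by exists (restr_map hSX y).
  case=> -[b Bb e] Xx; exists (exist X x Xx) => //=.
  suff -> : restr_map hSX (exist X x Xx) = b by [].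
  by apply: sig_eq; rewrite /= e.
rewrite -(hinv _ hA) (mu_restrX (i := 1%N) hmu hS hX hSX hfin hinv) //.
- exact: borel_pre.
by move=> x [b Bb e]; rewrite /= -e; exact: proj2_sig.
Qed.

Lemma cellE (Z : Type) (S : Z -> Z) (X : set Z)
  (hSX : forall x, X x -> X (S x)) k n (Zp : 'I_k.+1 -> set Z)
  (w : n.-tuple 'I_k.+1) :
  @proj1_sig Z X @` join_cell (restr_map hSX) (fun j => @proj1_sig Z X @^-1` Zp j) w
  = join_cell S Zp w `&` X.
Proof.
apply/seteqP; split => x /=.
  case=> y hy <-; split; last exact: proj2_sig.
  by move=> i; rewrite -iter_restr; apply: hy.
case=> hx Xx; exists (exist X x Xx) => //= i.
by rewrite /preimage /= iter_restr; apply: hx.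
Qed.

Lemma cell_borel (Z : topologicalType) (S : Z -> Z) k n (Zp : 'I_k.+1 -> set Z)
  (w : n.-tuple 'I_k.+1) :
  continuous S -> (forall j, borel (Zp j)) -> borel (join_cell S Zp w).
Proof.
move=> hS hZ.
pose F (m : nat) : set Z := [set y | forall i : 'I_n, val i = m -> Zp (tnth w i) (iter i S y)].
have -> : join_cell S Zp w = \bigcap_m F m.
  apply/seteqP; split => x /=.
    by move=> h m _ i _; apply: h.
  by move=> h i; apply: (h i).
apply: borel_bigcap => m.
case: (ltnP m n) => hm.
  have -> : F m = iter m S @^-1` Zp (tnth w (Ordinal hm)).
    apply/seteqP; split => x /=.
      by move=> h; apply: (h (Ordinal hm)).
    move=> h i him.
    have e : i = Ordinal hm by apply: val_inj.
    by rewrite e.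
  exact: borel_iter.
have -> : F m = setT.
  apply/seteqP; split => x // _ i him.
  by have := ltn_ord i; rewrite him ltnNge hm.
exact: borelT.
Qed.

Lemma ln_le_sub1 (R : realType) (y : R) : 0 < y -> ln y <= y - 1.
Proof.
move=> y0; have := expR_ge1Dx (ln y); rewrite lnK ?posrE //; lra.
Qed.

Lemma ent_bound (R : realType) (M x : R) : 0 <= x -> x <= M ->
  - (M ^+ 2) <= ent_fun x <= 1.
Proof.
move=> x0 xM; rewrite /ent_fun; case: eqP => [_|/eqP xn0].
  by apply/andP; split; [rewrite oppr_le0 sqr_ge0 | ].
have xp : 0 < x by rewrite lt_def xn0.
have h1 := @ln_le_sub1 R x^-1 ltac:(by rewrite invr_gt0).
have h2 := ln_le_sub1 xp.
rewrite lnV ?posrE // in h1 *.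
have h3 : x * - ln x <= x * (x^-1 - 1) by apply: ler_wpM2l; [exact: ltW | lra].
rewrite mulrBr mulfV // mulr1 in h3.
have h4 : x * (1 - x) <= x * - ln x by apply: ler_wpM2l; [exact: ltW | lra].
apply/andP; split; nra.
Qed.

Lemma ent_diff (R : realType) (Z : topologicalType) (S : Z -> Z)
  (X : set Z) (k : nat) (Zp : 'I_k.+1 -> set Z)
  (mu : set Z -> \bar R) (hmu : borel_measure mu)
  (hS : continuous S) (hX : borel X)
  (hSX : forall x, X x -> X (S x))
  (hfin : (mu setT < +oo)%E)
  (hinv : forall A, borel A -> mu (S @^-1` A) = mu A)
  (hZmeas : forall j, borel (Zp j))
  (hZX : forall j : 'I_k.+1, j != ord0 -> Zp j `<=` X) n :
  entropy_n mu S Zp n -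
  entropy_n (restr_measure mu X) (restr_map hSX)
             (fun j => (@proj1_sig Z X) @^-1` Zp j) n =
  ent_fun (fine (mu (join_cell S Zp (nseq_tuple n (ord0 : 'I_k.+1))))) -
  ent_fun (fine (mu (join_cell S Zp (nseq_tuple n (ord0 : 'I_k.+1)) `&` X))).
Proof.
set w0 := nseq_tuple n (ord0 : 'I_k.+1).
rewrite /entropy_n (bigD1 w0) // [X in _ - X](bigD1 w0) //=.
rewrite /restr_measure cellE.
set s1 := (\sum_(i | _) _)%R; set s2 := (\sum_(i | _) _)%R.
suff -> : s2 = s1 by rewrite opprD addrACA subrr addr0.
apply: eq_bigr => w hw; rewrite cellE.
have : ~~ [forall i, tnth w i == ord0].
  apply: contra hw => /forallP h; apply/eqP/eq_from_tnth => i.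
  by rewrite tnth_nseq; exact/eqP.
rewrite negb_forall => /existsP [i hi].
rewrite (mu_restrX (i := i) hmu hS hX hSX hfin hinv) //.
  exact: cell_borel.
by move=> x hx; apply: (hZX _ hi); apply: hx.
Qed.

Lemma lim_close (R : realType) (u v : nat -> R) (K : R) :
  (forall n, `|u n - v n| <= K * n%:R^-1) ->
  limn u = limn v.
Proof.
move=> hb.
have hinv0 : (fun n : nat => (n%:R : R)^-1) @ \oo --> 0.
  rewrite -cvg_shiftS; exact: cvg_harmonic.
have hK : (fun n : nat => K * (n%:R : R)^-1) @ \oo --> 0.
  by rewrite -(mulr0 K); apply: cvgMr.
have hd : (fun n => u n - v n) @ \oo --> 0.
  apply: (@squeeze_cvgr _ _ _ _ (fun n => - (K * n%:R^-1)) (fun n => K * n%:R^-1) (fun n => u n - v n)) => //.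
  - apply: nearW => n; have := hb n; rewrite ler_norml => /andP[h1 h2].
    by rewrite h1 h2.
  - by rewrite -oppr0; apply: cvgN.
have E : forall l : R, (u @ \oo --> l) <-> (v @ \oo --> l).
  move=> l; split => h.
    have -> : v = (fun n => u n - (u n - v n)) by apply/funext => n; rewrite opprB addrC subrK.
    by rewrite -(subr0 l); apply: cvgB.
  have -> : u = (fun n => v n + (u n - v n)) by apply/funext => n; rewrite addrC subrK.
  by rewrite -(addr0 l); apply: cvgD.
rewrite /lim /lim_in; congr get; apply/funext => l; apply/propext; exact: E.
Qed.

Unset Implicit Arguments. Set Strict Implicit.

Theorem lemma2p10 (R : realType) (Z : topologicalType) (S : Z -> Z)
  (X : set Z) (k : nat) (Zp : 'I_k.+1 -> set Z)
  (mu : set Z -> \bar R) (hmu : borel_measure mu)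
  (hS : continuous S)
  (hX : borel X)
  (hSX : forall x, X x -> X (S x))
  (hfin : (mu setT < +oo)%E)
  (hinv : forall A, borel A -> mu (S @^-1` A) = mu A)
  (hZmeas : forall j, borel (Zp j))
  (hZcover : \bigcup_j Zp j = setT)
  (hZdisj : forall i j, i != j -> Zp i `&` Zp j = set0)
  (hZX : forall j : 'I_k.+1, j != ord0 -> Zp j `<=` X) :
  (forall B : set {x : Z | X x}, induced_borel X B ->
     restr_measure mu X (restr_map hSX @^-1` B) = restr_measure mu X B) /\
  ks_entropy mu S Zp <=
  ks_entropy (restr_measure mu X) (restr_map hSX)
             (fun j => (@proj1_sig Z X) @^-1` Zp j).
Proof.
split; first exact: part1.
set M := fine (mu setT).
have hM : forall A, borel A -> 0 <= fine (mu A) <= M.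
  move=> A hA; rewrite fine_ge0 ?mu_ge0 //=.
  apply: fine_le; [exact: mu_fin | apply: mu_fin => //; exact: borelT |].
  by apply: mu_le => //; apply: borelT.
rewrite /ks_entropy.
set u := (fun n : nat => _); set v := (fun n : nat => _).
suff -> : limn u = limn v by [].
apply: (@lim_close _ u v (2 * (1 + M ^+ 2))) => n.
rewrite /u /v -mulrBr (ent_diff hmu hS hX hSX hfin hinv hZmeas hZX).
set w0 := nseq_tuple n (ord0 : 'I_k.+1).
have hc : borel (join_cell S Zp w0) by apply: cell_borel.
have /andP[a0 aM] := hM _ hc.
have /andP[b0 bM] := hM _ (borelI hc hX).
have /andP[ea1 ea2] := ent_bound a0 aM.
have /andP[eb1 eb2] := ent_bound b0 bM.
rewrite normrM mulrC [`|n%:R^-1|]ger0_norm ?invr_ge0 ?ler0n //.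
apply: ler_wpM2r; first by rewrite invr_ge0 ler0n.
rewrite ler_norml; apply/andP; split; lra.
Qed.
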